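(* Consider the iterates of SAS-ADMM (so $L\succeq0$ and $(\tau,s)\in\Delta$) and let $k\ge1$. With $\tilde G_k$ as defined in the context, define $$\omega_0=\Big(2-\tau-s-\frac{(1-s)^2}{1+\tau}\Big)\beta,\qquad \omega_1=\frac{(1-s)^2}{1+\tau}\beta,\qquad \omega_2=\frac{1-\tau}{1+\tau}.$$ Then $\omega_0,\omega_1,\omega_2\ge0$ and $$\|w^k-\tilde w^k\|_{\tilde G_k}^2\ge\|x^k-x^{k+1}\|_{\mathcal D_k}^2+\omega_0\|Ax^{k+1}+By^{k+1}-b\|^2+\omega_1\big(\|Ax^{k+1}+By^{k+1}-b\|^2-\|Ax^k+By^k-b\|^2\big)+\omega_2\big(\|y^k-y^{k+1}\|_L^2-\|y^{k-1}-y^k\|_L^2\big).$$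
   Context: Setting. $\mathcal X\subset\mathbb R^{n_1}$, $\mathcal Y\subset\mathbb R^{n_2}$ are nonempty closed convex sets; $A\in\mathbb R^{n\times n_1}$, $B\in\mathbb R^{n\times n_2}$, $b\in\mathbb R^n$; $g:\mathcal Y\to\mathbb R\cup\{+\infty\}$ is proper convex; $f=\frac1N\sum_{j=1}^N f_j$, each $f_j$ real-valued, convex and continuously differentiable on an open set containing $\mathcal X$. The problem is $\min\{f(x)+g(y): x\in\mathcal X,\ y\in\mathcal Y,\ Ax+By=b\}$. A fixed symmetric positive definite $H\in\mathbb R^{n_1\times n_1}$ and a constant $\nu>0$ satisfy $\|\nabla f_j(x_1)-\nabla f_j(x_2)\|_{H^{-1}}\le \nu\|x_1-x_2\|_H$ for all $x_1,x_2\in\mathcal X$ and all $j$. For a symmetric matrix $G$, $\|v\|_G^2:=v^\top G v$ (also when $G$ is indefinite); $G_1\succeq G_2$ means $G_1-G_2$ is positive semidefinite. $\mathcal L_\beta(x,y,\lambda)=f(x)+g(y)-\lambda^\top(Ax+By-b)+\frac\beta2\|Ax+By-b\|^2$. $\Delta:=\{(\tau,s)\in\mathbb R^2:\ \tau+s>0,\ \tau\le1,\ -\tau^2-s^2-\tau s+\tau+s+1\ge0\}$. Subroutine xsub. Inputs: $x^k\in\mathcal X$, $\breve x^k$, $h\in\mathbb R^{n_1}$, an integer $m_k\ge1$, $\eta_k>0$, a symmetric matrix $M_k$. Set $x_1=x^k$, $\breve x_1=\breve x^k$. For $t=1,\dots,m_k$: draw $\xi_t$ uniformly from $\{1,\dots,N\}$,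 independently of everything generated before; set $\beta_t=2/(t+1)$, $\gamma_t=2/(t\eta_k)$, $\hat x_t=\beta_t\breve x_t+(1-\beta_t)x_t$, $d_t=\nabla f_{\xi_t}(\hat x_t)+e_t$ where $e_t$ is a random vector whose conditional expectation given all previously generated random quantities and $\xi_t$ is $0$; $\breve x_{t+1}=\arg\min_{x\in\mathcal X}\{\langle d_t+h,x\rangle+\frac{\gamma_t}2\|x-\breve x_t\|_H^2+\frac12\|x-x^k\|_{M_k}^2\}$; $x_{t+1}=\beta_t\breve x_{t+1}+(1-\beta_t)x_t$. Output $x^{k+1}=x_{m_k+1}$, $\breve x^{k+1}=\breve x_{m_k+1}$. Algorithm SAS-ADMM. Parameters: $\beta>0$, the matrix $H$, a symmetric positive semidefinite $L\in\mathbb R^{n_2\times n_2}$, $(\tau,s)\in\Delta$. Start: $(x^0,y^0,\lambda^0)\in\mathcal X\times\mathcal Y\times\mathbb R^n$, $\breve x^0=x^0$. For $k=0,1,\dots$: choose an integer $m_k\ge1$, $\eta_k>0$, and a symmetric $M_k$ with $\mathcal D_k:=M_k-\beta A^\top A\succeq0$; set $h^k=-A^\top[\lambda^k-\beta(Ax^k+By^k-b)]$; compute $(x^{k+1},\breve x^{k+1})$ by xsub with inputs $x^k,\breve x^k,h^k,m_k,\eta_k,M_k$; $\lambda^{k+1/2}=\lambda^k-\tau\beta(Ax^{k+1}+By^k-b)$; $y^{k+1}\in\arg\min_{y\in\mathcal Y}\mathcal L_\beta(x^{k+1},y,\lambda^{k+1/2})+\frac12\|y-y^k\|_L^2$ (a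 minimizer is assumed to exist); $\lambda^{k+1}=\lambda^{k+1/2}-s\beta(Ax^{k+1}+By^{k+1}-b)$. Notation. $w^k=(x^k;y^k;\lambda^k)$; $\tilde\lambda^k=\lambda^k-\beta(Ax^{k+1}+By^k-b)$; $\tilde w^k=(x^{k+1};y^{k+1};\tilde\lambda^k)$; $$\tilde G_k=\begin{bmatrix}\mathcal D_k&0&0\\0&L+(1-s)\beta B^\top B&(s-1)B^\top\\0&(s-1)B&\frac{2-\tau-s}{\beta}I\end{bmatrix}.$$ *)

(* Defs.v *)
From HB Require Import structures.
From mathcomp Require Import all_boot all_order all_algebra.
From mathcomp Require Import all_classical all_reals all_analysis.
Set Implicit Arguments. Unset Strict Implicit. Unset Printing Implicit Defensive.
Import Order.TTheory GRing.Theory Num.Theory.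
Import numFieldNormedType.Exports.
Local Open Scope classical_set_scope.
Local Open Scope ring_scope.

Section Defs.
Variable R : realType.

(* ||v||_G^2 := v^T G v  (also for indefinite G) *)
Definition qf (p : nat) (G : 'M[R]_p) (v : 'cV[R]_p) : R := (v^T *m G *m v) 0 0.

Definition ip (p : nat) (u v : 'cV[R]_p) : R := (u^T *m v) 0 0.
Definition sqn (p : nat) (v : 'cV[R]_p) : R := ip v v.

Definition sym_mx (p : nat) (G : 'M[R]_p) : Prop := G^T = G.
(* G1 \succeq G2 for sym_mx matrices: G1 - G2 positive semidefinite *)
Definition psd (p : nat) (G : 'M[R]_p) : Prop := forall v : 'cV[R]_p, 0 <= qf G v.
Definition spd (p : nat) (G : 'M[R]_p) : Prop :=
  sym_mx G /\ forall v : 'cV[R]_p, v != 0 -> 0 < qf G v.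

Definition convex_set (p : nat) (S : set 'cV[R]_p) : Prop :=
  forall u v t, S u -> S v -> 0 <= t <= 1 -> S (t *: u + (1 - t) *: v).
Definition nonempty_closed_convex (p : nat) (S : set 'cV[R]_p) : Prop :=
  S !=set0 /\ closed S /\ convex_set S.

Definition convex_fun_on (p : nat) (S : set 'cV[R]_p) (h : 'cV[R]_p -> R) : Prop :=
  forall u v t, S u -> S v -> 0 <= t <= 1 ->
    h (t *: u + (1 - t) *: v) <= t * h u + (1 - t) * h v.

Definition proper_convex_on (p : nat) (S : set 'cV[R]_p) (g : 'cV[R]_p -> \bar R) : Prop :=
  (forall y, S y -> g y != -oo%E) /\ (exists y, S y /\ (g y < +oo)%E) /\
  (forall u v t, S u -> S v -> 0 <= t <= 1 ->
     (g (t *: u + (1 - t) *: v)%R <= t%:E * g u + (1 - t)%:E * g v)%E).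

Definition C1_on_open_nbhd (p : nat) (S : set 'cV[R]_p) (h : 'cV[R]_p -> R)
    (dh : 'cV[R]_p -> 'cV[R]_p) : Prop :=
  exists U : set 'cV[R]_p, open U /\ S `<=` U /\
    (forall x, U x -> differentiable h x /\ forall v, 'd h x v = ip (dh x) v) /\
    {within U, continuous dh}.

Definition Delta (tau s : R) : Prop :=
  0 < tau + s /\ tau <= 1 /\ 0 <= - tau ^+ 2 - s ^+ 2 - tau * s + tau + s + 1.

Definition is_argmin (p : nat) (S : set 'cV[R]_p) (phi : 'cV[R]_p -> R) (z : 'cV[R]_p) : Prop :=
  S z /\ forall x, S x -> phi z <= phi x.
Definition is_argmin_ext (p : nat) (S : set 'cV[R]_p) (phi : 'cV[R]_p -> \bar R)
    (z : 'cV[R]_p) : Prop :=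
  S z /\ forall x, S x -> (phi z <= phi x)%E.

(* One run (a realization) of subroutine xsub. xi t is the realized index drawn
   at inner step t (indices 'I_N stand for {1,..,N}); e t is the realized noise
   vector; xs t, bxs t are x_t, breve x_t. *)
Definition xsub_run (n1 N : nat) (X : set 'cV[R]_n1)
    (gradf : 'I_N -> 'cV[R]_n1 -> 'cV[R]_n1) (H : 'M[R]_n1)
    (xk bxk h : 'cV[R]_n1) (m : nat) (eta : R) (M : 'M[R]_n1)
    (xi : nat -> 'I_N) (e : nat -> 'cV[R]_n1) (xs bxs : nat -> 'cV[R]_n1) : Prop :=
  xs 1%N = xk /\ bxs 1%N = bxk /\
  forall t : nat, (1 <= t <= m)%N ->
    let beta_t : R := 2 / (t%:R + 1) in
    let gamma_t : R := 2 / (t%:R * eta) in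
    let hatx := beta_t *: bxs t + (1 - beta_t) *: xs t in
    let d := gradf (xi t) hatx + e t in
    is_argmin X (fun x => ip (d + h) x + gamma_t / 2 * qf H (x - bxs t)
                          + 1 / 2 * qf M (x - xk)) (bxs t.+1) /\
    xs t.+1 = beta_t *: bxs t.+1 + (1 - beta_t) *: xs t.

Definition aug_lag (n n1 n2 : nat) (A : 'M[R]_(n, n1)) (B : 'M[R]_(n, n2)) (b : 'cV[R]_n)
    (f : 'cV[R]_n1 -> R) (g : 'cV[R]_n2 -> \bar R) (beta : R)
    (x : 'cV[R]_n1) (y : 'cV[R]_n2) (lam : 'cV[R]_n) : \bar R :=
  ((f x)%:E + g y + (- ip lam (A *m x + B *m y - b)%R + beta / 2 * sqn (A *m x + B *m y - b)%R)%R%:E)%E.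

Definition Gtilde (n n1 n2 : nat) (B : 'M[R]_(n, n2)) (L : 'M[R]_n2) (beta s tau : R)
    (D : 'M[R]_n1) : 'M[R]_(n1 + (n2 + n)) :=
  block_mx D 0 0
    (block_mx (L + ((1 - s) * beta) *: (B^T *m B)) ((s - 1) *: B^T)
              ((s - 1) *: B) (((2 - tau - s) / beta) *: 1%:M)).

Definition favg (n1 N : nat) (fj : 'I_N -> 'cV[R]_n1 -> R) (x : 'cV[R]_n1) : R :=
  N%:R^-1 * \sum_(j < N) fj j x.

(* (x, bx, y, lam) are the iterates of one realization of SAS-ADMM, with the
   per-iteration choices m k, eta k, M k. *)
Definition sas_admm_iterates (n n1 n2 N : nat) (X : set 'cV[R]_n1) (Y : set 'cV[R]_n2)
    (A : 'M[R]_(n, n1)) (B : 'M[R]_(n, n2)) (b : 'cV[R]_n)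
    (f : 'cV[R]_n1 -> R) (g : 'cV[R]_n2 -> \bar R)
    (gradf : 'I_N -> 'cV[R]_n1 -> 'cV[R]_n1) (H : 'M[R]_n1)
    (beta : R) (L : 'M[R]_n2) (tau s : R)
    (m : nat -> nat) (eta : nat -> R) (M : nat -> 'M[R]_n1)
    (x bx : nat -> 'cV[R]_n1) (y : nat -> 'cV[R]_n2) (lam : nat -> 'cV[R]_n) : Prop :=
  X (x 0%N) /\ Y (y 0%N) /\ bx 0%N = x 0%N /\
  forall k : nat,
    [/\ (1 <= m k)%N, 0 < eta k, sym_mx (M k) & psd (M k - beta *: (A^T *m A))] /\
    let hk := - (A^T *m (lam k - beta *: (A *m x k + B *m y k - b))) in
    (exists (xi : nat -> 'I_N) (e : nat -> 'cV[R]_n1) (xs bxs : nat -> 'cV[R]_n1),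
        xsub_run X gradf H (x k) (bx k) hk (m k) (eta k) (M k) xi e xs bxs /\
        x k.+1 = xs (m k).+1 /\ bx k.+1 = bxs (m k).+1) /\
    let lamh := lam k - (tau * beta) *: (A *m x k.+1 + B *m y k - b) in
    is_argmin_ext Y (fun v => (aug_lag A B b f g beta (x k.+1) v lamh
                               + (1 / 2 * qf L (v - y k))%:E)%E) (y k.+1) /\
    lam k.+1 = lamh - (s * beta) *: (A *m x k.+1 + B *m y k.+1 - b).

End Defs.

(* Main.v *)
Require Import Defs.
From HB Require Import structures.
From mathcomp Require Import all_boot all_order all_algebra.
From mathcomp Require Import all_classical all_reals all_analysis.
From mathcomp Require Import ring lra.
Import Order.TTheory GRing.Theory Num.Theory.
Import numFieldNormedType.Exports.
Local Open Scope classical_set_scope.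
Local Open Scope ring_scope.

Section IP.
Variable R : realType.
Implicit Types (p : nat).

Lemma ipDl p (u v w : 'cV[R]_p) : ip (u + v) w = ip u w + ip v w.
Proof. by rewrite /ip linearD /= mulmxDl mxE. Qed.
Lemma ipDr p (u v w : 'cV[R]_p) : ip w (u + v) = ip w u + ip w v.
Proof. by rewrite /ip mulmxDr mxE. Qed.
Lemma ipZl p (c : R) (u w : 'cV[R]_p) : ip (c *: u) w = c * ip u w.
Proof. by rewrite /ip linearZ /= -scalemxAl mxE. Qed.
Lemma ipZr p (c : R) (u w : 'cV[R]_p) : ip w (c *: u) = c * ip w u.
Proof. by rewrite /ip -scalemxAr mxE. Qed.
Lemma ipNl p (u w : 'cV[R]_p) : ip (- u) w = - ip u w.
Proof. by rewrite -(scaleN1r u) ipZl mulN1r. Qed.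
Lemma ipNr p (u w : 'cV[R]_p) : ip w (- u) = - ip w u.
Proof. by rewrite -(scaleN1r u) ipZr mulN1r. Qed.
Lemma ipBl p (u v w : 'cV[R]_p) : ip (u - v) w = ip u w - ip v w.
Proof. by rewrite ipDl ipNl. Qed.
Lemma ipBr p (u v w : 'cV[R]_p) : ip w (u - v) = ip w u - ip w v.
Proof. by rewrite ipDr ipNr. Qed.
Lemma ip0r p (w : 'cV[R]_p) : ip w 0 = 0.
Proof. by rewrite /ip mulmx0 mxE. Qed.
Lemma ipC p (u v : 'cV[R]_p) : ip u v = ip v u.
Proof. rewrite /ip. have -> : v^T *m u = (u^T *m v)^T by rewrite trmx_mul trmxK. by rewrite [in RHS]mxE. Qed.
Lemma ip_mull p q (C : 'M[R]_(q, p)) (u : 'cV[R]_p) (v : 'cV[R]_q) :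
  ip (C *m u) v = ip u (C^T *m v).
Proof. by rewrite /ip trmx_mul mulmxA. Qed.
Lemma qfE p (G : 'M[R]_p) v : qf G v = ip v (G *m v).
Proof. by rewrite /qf /ip mulmxA. Qed.
Lemma sqnE p (v : 'cV[R]_p) : sqn v = ip v v.
Proof. by []. Qed.
Lemma ip_ge0 p (v : 'cV[R]_p) : 0 <= ip v v.
Proof.
rewrite /ip mxE; apply: sumr_ge0 => i _; by rewrite mxE -expr2 sqr_ge0.
Qed.
Lemma ip_col p q (u u' : 'cV[R]_p) (v v' : 'cV[R]_q) :
  ip (col_mx u v) (col_mx u' v') = ip u u' + ip v v'.
Proof. by rewrite /ip tr_col_mx mul_row_col mxE. Qed.
Lemma ip_sym p (G : 'M[R]_p) (u v : 'cV[R]_p) : G^T = G ->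
  ip u (G *m v) = ip v (G *m u).
Proof. by move=> hG; rewrite ipC ip_mull hG. Qed.

Lemma t_lemma (P c : R) : (forall t, 0 < t <= 1 -> 0 <= t * P + t ^+ 2 * c) -> 0 <= P.
Proof.
move=> Ht; rewrite leNgt; apply/negP => hP.
set D := `|c| + 1 - P.
have hD : 0 < D by rewrite /D; have := normr_ge0 c; lra.
have := Ht (- P / D).
have h1 : 0 < - P / D by apply: divr_gt0; lra.
have h2 : - P / D <= 1 by rewrite ler_pdivrMr // mul1r /D; have := normr_ge0 c; lra.
move=> /(_ (andb_true_intro (conj h1 h2))).
have -> : - P / D * P + (- P / D) ^+ 2 * c = (c - D) * (P ^+ 2 / D ^+ 2).
  by field; rewrite gt_eqF.
rewrite leNgt => /negP; apply; rewrite pmulr_llt0; last first.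
  by apply: divr_gt0; rewrite expr2; nra.
have := ler_norm c; rewrite /D; lra.
Qed.

Lemma phiE n n1 n2 (A : 'M[R]_(n,n1)) (B : 'M[R]_(n,n2)) b f g beta L xx yp (lh : 'cV[R]_n) v :
  g v \is a fin_num ->
  (aug_lag A B b f g beta xx v lh + (1 / 2 * qf L (v - yp))%:E)%E =
  (fine (g v) + (f xx + (- ip lh (A *m xx + B *m v - b) + beta / 2 * sqn (A *m xx + B *m v - b))
     + 1 / 2 * qf L (v - yp)))%:E.
Proof.
move=> gv; rewrite /aug_lag -(fineK gv) -!EFinD; congr EFin; rewrite fineK //; ring.
Qed.

Lemma y_fin n n1 n2 (Y : set 'cV[R]_n2) (A : 'M[R]_(n,n1)) (B : 'M[R]_(n,n2)) b f g beta L xx yp ys (lh : 'cV[R]_n) :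
  proper_convex_on Y g ->
  is_argmin_ext Y (fun v => (aug_lag A B b f g beta xx v lh + (1 / 2 * qf L (v - yp))%:E)%E) ys ->
  g ys \is a fin_num.
Proof.
move=> [gN [[y0 [Y0 g0]] _]] [Yys Hmin].
have g0f : g y0 \is a fin_num by rewrite fin_numE gN //= lt_eqF.
have := Hmin y0 Y0; rewrite (@phiE _ _ _ _ _ _ _ _ _ _ _ _ _ y0 g0f).
rewrite /aug_lag fin_numE gN //=; case E: (g ys) => [r| |] //=.
Qed.

Lemma y_vi n n1 n2 (Y : set 'cV[R]_n2) (A : 'M[R]_(n,n1)) (B : 'M[R]_(n,n2)) b f g beta L xx yp ys z (lh : 'cV[R]_n) :
  Defs.convex_set Y -> proper_convex_on Y g ->
  is_argmin_ext Y (fun v => (aug_lag A B b f g beta xx v lh + (1 / 2 * qf L (v - yp))%:E)%E) ys ->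
  Y z -> g z \is a fin_num ->
  0 <= fine (g z) - fine (g ys) + (- ip lh (B *m (z - ys))
     + beta / 2 * (ip (A *m xx + B *m ys - b) (B *m (z - ys)) + ip (B *m (z - ys)) (A *m xx + B *m ys - b))
     + 1 / 2 * (ip (ys - yp) (L *m (z - ys)) + ip (z - ys) (L *m (ys - yp)))).
Proof.
move=> cY gP Hm Yz gz.
have gys : g ys \is a fin_num by move: gP Hm; apply: y_fin.
move: gP Hm => [gN [_ gC]] [Yys Hmin].
set d := z - ys; set c := A *m xx + B *m ys - b; set e := ys - yp.
set F := fun v => f xx + (- ip lh (A *m xx + B *m v - b) + beta / 2 * sqn (A *m xx + B *m v - b))
     + 1 / 2 * qf L (v - yp).
set lin := (X in 0 <= _ + X).
set quad := beta / 2 * ip (B *m d) (B *m d) + 1 / 2 * ip d (L *m d).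
apply: (@t_lemma _ quad) => t /andP[t0 t1].
set vt := ys + t *: d.
have vtE : vt = t *: z + (1 - t) *: ys.
  by apply/matrixP=> i j; rewrite /vt /d !mxE; ring.
have t01 : 0 <= t <= 1 by apply/andP; split; lra.
have Yvt : Y vt by rewrite vtE; exact: (cY z ys t Yz Yys t01).
have gvt := gC z ys t Yz Yys t01.
rewrite -vtE -(fineK gz) -(fineK gys) -!EFinM -EFinD in gvt.
have Hv := Hmin vt Yvt.
rewrite (@phiE _ _ _ _ _ _ _ _ _ _ _ _ _ ys gys) in Hv.
move: Hv gvt; rewrite /aug_lag; case E: (g vt) => [r| |] //=.
rewrite -!EFinD !lee_fin => Hv gvt.
have FE : F vt = F ys + t * lin + t ^+ 2 * quad.
  rewrite /F /lin.
  have -> : A *m xx + B *m vt - b = c + t *: (B *m d).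
    by rewrite /vt mulmxDr -scalemxAr /c addrA [LHS]addrAC.
  have -> : vt - yp = e + t *: d by rewrite /vt /e addrAC.
  rewrite -/c -/e !sqnE !qfE (mulmxDr L) -(scalemxAr t L) /quad.
  rewrite !(ipDl, ipDr, ipZl, ipZr, ipNl, ipNr).
  ring.
have Hv' : fine (g ys) + F ys <= r + F vt by move: Hv; rewrite /F; lra.
rewrite FE in Hv'; lra.
Qed.

Lemma delta_tau (tau s : R) : Delta tau s -> 0 < 1 + tau.
Proof. rewrite /Delta => -[h1 [h2 h3]]. rewrite !expr2 in h3. nra. Qed.

Lemma final_ineq (beta tau s Q Lu Lu' Luu' A2 ar ark R2 Rk2 : R) :
  0 < beta -> Delta tau s -> 0 <= Lu -> 0 <= Lu - 2 * Luu' + Lu' ->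
  0 <= (1 - tau) ^+ 2 * A2 + 2 * (1 - tau) * (1 - s) * ark + (1 - s) ^+ 2 * Rk2 ->
  Lu - Luu' <= beta * ((1 + tau) * ar + tau * A2 - (1 - s) * ark) ->
  let omega0 := (2 - tau - s - (1 - s) ^+ 2 / (1 + tau)) * beta in
  let omega1 := (1 - s) ^+ 2 / (1 + tau) * beta in
  let omega2 := (1 - tau) / (1 + tau) in
  [/\ 0 <= omega0, 0 <= omega1, 0 <= omega2 &
   Q + omega0 * R2 + omega1 * (R2 - Rk2) + omega2 * (Lu - Lu') <=
   Q + Lu + beta * (1 - tau) * A2 + 2 * beta * (1 - tau) * ar + beta * (2 - tau - s) * R2].
Proof.
move=> hb hD hLu hF2 hF3 hF1 o0 o1 o2.
have ht := delta_tau _ _ hD.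
move: hD => [d1 [d2 d3]].
have hi : 0 < (1 + tau)^-1 by rewrite invr_gt0.
split.
- rewrite /o0; apply: mulr_ge0; last lra.
  have -> : 2 - tau - s - (1 - s) ^+ 2 / (1 + tau) =
     (- tau ^+ 2 - s ^+ 2 - tau * s + tau + s + 1) / (1 + tau) by field; lra.
  by apply: divr_ge0 => //; lra.
- by rewrite /o1; apply: mulr_ge0; [apply: divr_ge0; [apply: sqr_ge0|lra]|lra].
- by rewrite /o2; apply: divr_ge0; lra.
rewrite -subr_ge0.
set RHS := (X in 0 <= X).
have -> : RHS = ((1 + tau) * Lu + (1 - tau) * (Lu - 2 * Luu' + Lu')
   + beta * ((1 - tau) ^+ 2 * A2 + 2 * (1 - tau) * (1 - s) * ark + (1 - s) ^+ 2 * Rk2)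
   + 2 * (1 - tau) * (beta * ((1 + tau) * ar + tau * A2 - (1 - s) * ark) - (Lu - Luu'))) / (1 + tau).
  by rewrite /RHS /o0 /o1 /o2; field; lra.
apply: divr_ge0; last lra.
have : 0 <= (1 - tau) * (Lu - 2 * Luu' + Lu') by apply: mulr_ge0; lra.
have : 0 <= beta * ((1 - tau) ^+ 2 * A2 + 2 * (1 - tau) * (1 - s) * ark + (1 - s) ^+ 2 * Rk2) by apply: mulr_ge0; lra.
have : 0 <= 2 * (1 - tau) * (beta * ((1 + tau) * ar + tau * A2 - (1 - s) * ark) - (Lu - Luu')) by apply: mulr_ge0; lra.
have : 0 <= (1 + tau) * Lu by apply: mulr_ge0; lra.
lra.
Qed.
End IP.
Arguments ipC {R p}.
Arguments ip_ge0 {R p}.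
Arguments final_ineq {R}.
Arguments ip_sym {R p G}.
Arguments y_vi {R n n1 n2 Y A B b f g beta L xx yp ys z lh}.
Arguments y_fin {R n n1 n2 Y A B b f g beta L xx yp ys lh}.
Theorem theorem3p3 (R : realType) (n n1 n2 N : nat)
  (X : set 'cV[R]_n1) (Y : set 'cV[R]_n2)
  (A : 'M[R]_(n, n1)) (B : 'M[R]_(n, n2)) (b : 'cV[R]_n)
  (g : 'cV[R]_n2 -> \bar R)
  (fj : 'I_N -> 'cV[R]_n1 -> R) (gradf : 'I_N -> 'cV[R]_n1 -> 'cV[R]_n1)
  (H : 'M[R]_n1) (nu : R) (beta : R) (L : 'M[R]_n2) (tau s : R)
  (m : nat -> nat) (eta : nat -> R) (M : nat -> 'M[R]_n1)
  (x bx : nat -> 'cV[R]_n1) (y : nat -> 'cV[R]_n2) (lam : nat -> 'cV[R]_n)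
  (k : nat) :
  (0 < N)%N ->
  nonempty_closed_convex X -> nonempty_closed_convex Y ->
  proper_convex_on Y g ->
  (forall j, convex_fun_on X (fj j) /\ C1_on_open_nbhd X (fj j) (gradf j)) ->
  spd H -> 0 < nu ->
  (forall j x1 x2, X x1 -> X x2 ->
     Num.sqrt (qf (invmx H) (gradf j x1 - gradf j x2)) <= nu * Num.sqrt (qf H (x1 - x2))) ->
  0 < beta -> sym_mx L -> psd L -> Delta tau s ->
  sas_admm_iterates X Y A B b (favg fj) g gradf H beta L tau s m eta M x bx y lam ->
  (1 <= k)%N ->
  let omega0 := (2 - tau - s - (1 - s) ^+ 2 / (1 + tau)) * beta in
  let omega1 := (1 - s) ^+ 2 / (1 + tau) * beta in
  let omega2 := (1 - tau) / (1 + tau) in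
  let Dk := M k - beta *: (A^T *m A) in
  let r := fun i => A *m x i + B *m y i - b in
  let w := col_mx (x k) (col_mx (y k) (lam k)) in
  let lamt := lam k - beta *: (A *m x k.+1 + B *m y k - b) in
  let wt := col_mx (x k.+1) (col_mx (y k.+1) lamt) in
  [/\ 0 <= omega0, 0 <= omega1, 0 <= omega2 &
   qf (Gtilde B L beta s tau Dk) (w - wt) >=
     qf Dk (x k - x k.+1) + omega0 * sqn (r k.+1)
     + omega1 * (sqn (r k.+1) - sqn (r k))
     + omega2 * (qf L (y k - y k.+1) - qf L (y k.-1 - y k))].
Proof.
move=> _ _ [_ [_ cY]] gP _ _ _ _ hb symL psdL hD Hit.
case: k => [//|k] _ o0 o1 o2 Dk r w lamt wt.
move: Hit => [_ [_ [_ Hit]]].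
have [_ [_ [Am1 lam1]]] := Hit k.
have [_ [_ [Am2 _]]] := Hit k.+1.
rewrite /= in Am1 lam1 Am2.
have g1 : g (y k.+1) \is a fin_num by move: gP Am1; apply: y_fin.
have g2 : g (y k.+2) \is a fin_num by move: gP Am2; apply: y_fin.
have vi2 := y_vi cY gP Am2 (proj1 Am1) g1.
have vi1 := y_vi cY gP Am1 (proj1 Am2) g2.
have E1 : y k.+2 - y k.+1 = - (y k.+1 - y k.+2) by rewrite opprB.
have E2 : y k.+1 - y k = - (y k - y k.+1) by rewrite opprB.
have EV : A *m x k.+2 + B *m y k.+1 - b =
   (A *m x k.+2 + B *m y k.+2 - b) + B *m (y k.+1 - y k.+2).
  by rewrite mulmxBr; apply/matrixP=> i j; rewrite !mxE; ring.
rewrite EV lam1 in vi2.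
rewrite !E1 in vi1 vi2; rewrite E2 in vi1.
have wE : w - wt = col_mx (x k.+1 - x k.+2) (col_mx (y k.+1 - y k.+2)
     (beta *: (A *m x k.+2 + B *m y k.+2 - b + B *m (y k.+1 - y k.+2)))).
  rewrite /w /wt /lamt -EV.
  by rewrite opp_col_mx add_col_mx opp_col_mx add_col_mx subKr.
rewrite wE /r /=.
rewrite [qf (Gtilde _ _ _ _ _ _) _]qfE /Gtilde !mul_block_col !ip_col !mul0mx !addr0 !add0r ip_col.
set u := y k.+1 - y k.+2 in vi1 vi2 *.
set u' := y k - y k.+1 in vi1 vi2 *.
set rr := A *m x k.+2 + B *m y k.+2 - b in vi1 vi2 *.
set rk := A *m x k.+1 + B *m y k.+1 - b in vi1 vi2 *.
set lh1 := lam k - (tau * beta) *: (A *m x k.+1 + B *m y k - b) in vi1 vi2 *.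
rewrite !mulmxN in vi1 vi2.
set a := B *m u in vi1 vi2 *.
set dx := x k.+1 - x k.+2.
clearbody Dk u u' rr rk lh1 dx.
rewrite mulmxDl -!scalemxAl -mulmxA -/a mul1mx.
rewrite !(ipDl, ipDr, ipZl, ipZr, ipNl, ipNr) in vi1 vi2 *.
rewrite -!ip_mull -/a.
rewrite !(ipDl, ipDr, ipZl, ipZr, ipNl, ipNr).
rewrite (ipC a rr) (ipC a rk) (ip_sym u' u symL) in vi1 vi2 *.
rewrite !qfE !sqnE.
have F1 : ip u (L *m u) - ip u (L *m u') <=
    beta * ((1 + tau) * ip rr a + tau * ip a a - (1 - s) * ip rk a) by lra.
have hLu : 0 <= ip u (L *m u) by rewrite -qfE; apply: psdL.
have F2 : 0 <= ip u (L *m u) - 2 * ip u (L *m u') + ip u' (L *m u').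
  have := psdL (u - u'); rewrite qfE mulmxBr !(ipDl, ipDr, ipZl, ipZr, ipNl, ipNr).
  rewrite (ip_sym u' u symL); lra.
have F3 : 0 <= (1 - tau) ^+ 2 * ip a a + 2 * (1 - tau) * (1 - s) * ip rk a
    + (1 - s) ^+ 2 * ip rk rk.
  have := ip_ge0 ((1 - tau) *: a + (1 - s) *: rk).
  rewrite !(ipDl, ipDr, ipZl, ipZr, ipNl, ipNr) (ipC a rk).
  set P := (X in 0 <= X -> _); set Q := (X in _ -> 0 <= X).
  have -> : Q = P by rewrite /P /Q; ring.
  done.
have := final_ineq beta tau s (ip dx (Dk *m dx)) _ _ _ _ _ _ (ip rr rr) (ip rk rk) hb hD hLu F2 F3 F1.
case=> h0 h1 h2 h3; split => //.
apply: (le_trans h3); rewrite le_eqVlt; apply/orP; left; apply/eqP.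
by field; rewrite gt_eqF.
Qed.
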